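(* Let $\mathbb{T}$ be the $m$-regular tree, and let $L_1$, $L_2$ be the averaging operators on $\mathbb{T}$ with parameters $\beta_1,\beta_2\in[0,1]$ respectively. Let $h_1,h_2:\mathbb{T}\to\mathbb{R}$ and let $f,g:[0,1]\to\mathbb{R}$ be continuous with $f(s)>g(s)$ for all $s\in[0,1]$. Assume that $0\le \beta_1<\tfrac12$, $0\le\beta_2<\tfrac12$, that the series defining $S^{\beta_1}_{h_1}(x)$ and $S^{\beta_2}_{h_2}(x)$ converge for every $x\in\mathbb{T}$, and that for $i=1,2$ $$\lim_{k\to\infty}\ \sup_{x\in\mathbb{T},\,|x|=k}\ \Big|\sum_{j=1}^{k}\Big(\frac{\beta_i}{1-\beta_i}\Big)^{k-j} S^{\beta_i}_{h_i}(x^j)\Big| = 0 .$$ Then there exists a pair of functions $u,v:\mathbb{T}\to\mathbb{R}$ solving the two membranes problem, i.e. $$\max\big\{-L_1(u)(x)+h_1(x),\ v(x)-u(x)\big\}=0,\qquad \min\big\{-L_2(v)(x)+h_2(x),\ u(x)-v(x)\big\}=0\qquad\text{for all }x\in\mathbb{T},$$ with $u|_{\partial\mathbb{T}}=f$ and $v|_{\partial\mathbb{T}}=g$. Moreover, the coincidence set $\{x\in\mathbb{T}: u(x)=v(x)\}$ of this solution is finite.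
   Context: The $m$-regular tree $\mathbb{T}$ ($m\ge 2$): its nodes are the root $\emptyset$ and all finite tuples $x=(a_1,\dots,a_k)$ with $a_i\in\{0,\dots,m-1\}$; $|x|=k$ is the level of $x$ ($|\emptyset|=0$). For $x\neq\emptyset$, $\hat x$ denotes its predecessor (delete the last entry). $S^l(x)$ is the set of the $m^l$ successors of $x$ at level $|x|+l$ (tuples extending $x$ by $l$ entries), $S^0(x)=\{x\}$. For $|x|=k$ and $1\le j\le k$, $x^j$ is the predecessor of $x$ at level $j$ (so $x^k=x$). A branch $z$ is an infinite sequence $(a_1,a_2,\dots)$, equivalently the sequence of nodes $z_n=(a_1,\dots,a_n)$; $\partial\mathbb{T}$ is the set of branches, and $\psi(z)=\sum_{k\ge1}a_k m^{-k}\in[0,1]$. A branch $z$ passes through $x$ if $x=z_{|x|}$. Averaging operator with parameter $\beta\in[0,1]$: for $u:\mathbb{T}\to\mathbb{R}$, $L(u)(x)=u(x)-\beta u(\hat x)-(1-\beta)\frac1m\sum_{y\in S^1(x)}u(y)$ for $x\ne\emptyset$, and $L(u)(\emptyset)=u(\emptyset)-\frac1m\sum_{y\in S^1(\emptyset)}u(y)$. Boundary condition: $u|_{\partial\mathbb{T}}=f$ means the uniform limit: for every $\varepsilon>0$ there is $K$ such that $|u(x)-f(\psi(z))|<\varepsilon$ for every node $x$ with $|x|\ge K$ and every branch $z$ passing through $x$. For $\beta\in[0,1)$ and $h:\mathbb{T}\to\mathbb{R}$, $S^\beta_h(x)=\sum_{i=1}^\infty\sum_{j=0}^{i-1}\frac{\beta^{i-j-1}}{(1-\beta)^{i-j}}\,\frac{1}{m^j}\sum_{y\in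 S^j(x)}h(y)$ (for $\beta>0$ this equals $\frac1\beta\sum_{i\ge1}\sum_{j=0}^{i-1}(\frac{\beta}{1-\beta})^{i-j}m^{-j}\sum_{y\in S^j(x)}h(y)$). The convention $0^0=1$ is used. *)

(* Defs.v *)
From HB Require Import structures.
From mathcomp Require Import all_boot all_order all_algebra.
From mathcomp Require Import all_classical all_reals all_analysis.
Set Implicit Arguments. Unset Strict Implicit. Unset Printing Implicit Defensive.
Import Order.TTheory GRing.Theory Num.Theory.
Import numFieldNormedType.Exports.
Local Open Scope classical_set_scope.
Local Open Scope ring_scope.

(* Nodes of the m-regular tree: finite sequences with entries in 'I_m;
   the level |x| is size x; the root is [::]. *)
Definition node (m : nat) := seq 'I_m.

Definition pred_node (m : nat) (x : node m) : node m := take (size x).-1 x.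

Definition anc (m : nat) (x : node m) (j : nat) : node m := take j x.

Definition avg_succ (R : realType) (m : nat) (h : node m -> R) (j : nat)
  (x : node m) : R :=
  (m%:R ^+ j)^-1 * \sum_(t : j.-tuple 'I_m) h (x ++ tval t).

Definition Lop (R : realType) (m : nat) (beta : R) (u : node m -> R)
  (x : node m) : R :=
  if x is [::] then u x - avg_succ u 1 x
  else u x - beta * u (pred_node x) - (1 - beta) * avg_succ u 1 x.

Definition S_term (R : realType) (m : nat) (beta : R) (h : node m -> R)
  (x : node m) (i : nat) : R :=
  \sum_(j < i) (beta ^+ (i - j - 1) / (1 - beta) ^+ (i - j)) * avg_succ h j x.

Definition S_partial (R : realType) (m : nat) (beta : R) (h : node m -> R)
  (x : node m) (n : nat) : R :=
  \sum_(1 <= i < n.+1) S_term beta h x i.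

Definition S_conv (R : realType) (m : nat) (beta : R) (h : node m -> R)
  (x : node m) : Prop := cvg (S_partial beta h x @ \oo).

Definition S_val (R : realType) (m : nat) (beta : R) (h : node m -> R)
  (x : node m) : R := lim (S_partial beta h x @ \oo).

(* sup over nodes of level k of | sum_{j=1}^k (beta/(1-beta))^(k-j) S(x^j) | ;
   the level-k nodes are the k-tuples (finitely many, nonempty for m >= 1) *)
Definition S_sup (R : realType) (m : nat) (beta : R) (h : node m -> R)
  (k : nat) : R :=
  \big[Num.max/0]_(x : k.-tuple 'I_m)
     `| \sum_(1 <= j < k.+1) (beta / (1 - beta)) ^+ (k - j)
          * S_val beta h (anc (tval x) j) |.

Definition branch (m : nat) := nat -> 'I_m.

Definition psi (R : realType) (m : nat) (z : branch m) : R :=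
  lim ((fun n => \sum_(k < n) ((z k : nat)%:R / m%:R ^+ k.+1 : R)) @ \oo).

Definition passes (m : nat) (z : branch m) (x : node m) : Prop :=
  x = mkseq z (size x).

(* u|_{\partial T} = f  (uniform limit) *)
Definition boundary_eq (R : realType) (m : nat) (u : node m -> R)
  (f : R -> R) : Prop :=
  forall eps : R, 0 < eps -> exists K : nat, forall (x : node m) (z : branch m),
    (K <= size x)%N -> passes z x -> `| u x - f (psi R z) | < eps.

(* Main.v *)
Require Import Defs.
From HB Require Import structures.
From mathcomp Require Import all_boot all_order all_algebra.
From mathcomp Require Import all_classical all_reals all_analysis.
From mathcomp Require Import ring lra zify.
Import Order.TTheory GRing.Theory Num.Theory.
Import numFieldNormedType.Exports.
Local Open Scope classical_set_scope.
Local Open Scope ring_scope.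
Set Implicit Arguments. Unset Strict Implicit. Unset Printing Implicit Defensive.
Definition av (R : realType) (m : nat) (u : node m -> R) (x : node m) : R :=
  m%:R^-1 * \sum_(i < m) u (rcons x i).

Lemma sum_tupleS (R : realType) (T : finType) n (F : n.+1.-tuple T -> R) :
  \sum_(t : n.+1.-tuple T) F t = \sum_(a : T) \sum_(t : n.-tuple T) F [tuple of a :: t].
Proof.
rewrite pair_big /=.
rewrite (reindex (fun p : T * n.-tuple T => [tuple of p.1 :: p.2])) //=.
exists (fun t => (thead t, [tuple of behead t])) => [[a t] _|t _] /=.
  by congr pair; apply: val_inj.
by apply: val_inj => /=; case: t => -[|a s] //= _.
Qed.

Lemma sum_tuple0 (R : realType) (T : finType) (F : 0.-tuple T -> R) :
  \sum_(t : 0.-tuple T) F t = F [tuple].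
Proof.
rewrite (big_pred1 [tuple]) // => t /=.
by rewrite (tuple0 t); apply/esym/eqP.
Qed.

Lemma avg0 (R : realType) m (h : node m -> R) x : avg_succ h 0 x = h x.
Proof. by rewrite /avg_succ expr0 invr1 mul1r sum_tuple0 /= cats0. Qed.

Lemma avgS (R : realType) m (h : node m -> R) j x :
  avg_succ h j.+1 x = av (fun y => avg_succ h j y) x.
Proof.
rewrite /avg_succ /av sum_tupleS exprS invfM -mulrA mulr_sumr.
congr (_ * _); apply: eq_bigr => a _; congr (_ * _); apply: eq_bigr => t _.
by rewrite /= cat_rcons.
Qed.

Lemma avg1 (R : realType) m (h : node m -> R) x : avg_succ h 1 x = av h x.
Proof. by rewrite avgS; congr (_ * _); apply: eq_bigr => i _; rewrite avg0. Qed.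

Lemma avg_comp (R : realType) m (h : node m -> R) n l x :
  avg_succ (fun y => avg_succ h l y) n x = avg_succ h (n + l) x.
Proof.
elim: n x => [|n IH] x; first by rewrite avg0.
by rewrite avgS addSn avgS; congr (_ * _); apply: eq_bigr => i _; rewrite IH.
Qed.

Lemma av_lin (R : realType) m (u v : node m -> R) c x :
  av (fun y => u y + c * v y) x = av u x + c * av v x.
Proof.
rewrite /av big_split /= mulrDr; congr (_ + _).
by rewrite -mulr_sumr; ring.
Qed.

Lemma av_cst (R : realType) m (hm : (0 < m)%N) (c : R) x :
  av (fun _ : node m => c) x = c.
Proof.
have m0 : (m%:R : R) != 0 by rewrite pnatr_eq0 -lt0n.
by rewrite /av sumr_const card_ord -mulr_natr; field.
Qed.

Lemma av_le (R : realType) m (u v : node m -> R) x :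
  (forall i, u (rcons x i) <= v (rcons x i)) -> av u x <= av v x.
Proof.
move=> H; rewrite /av ler_wpM2l ?invr_ge0 ?ler0n //.
by apply: ler_sum => i _; apply: H.
Qed.

Lemma avg_lin (R : realType) m (u v : node m -> R) c n x :
  avg_succ (fun y => u y + c * v y) n x = avg_succ u n x + c * avg_succ v n x.
Proof.
rewrite /avg_succ big_split /= mulrDr; congr (_ + _).
by rewrite -mulr_sumr; ring.
Qed.

Lemma avg_bound (R : realType) m (hm : (0 < m)%N) (F : node m -> R) n x (c e : R) :
  (forall t : n.-tuple 'I_m, `|F (x ++ t) - c| <= e) -> `|avg_succ F n x - c| <= e.
Proof.
move=> H.
have mn0 : (m%:R ^+ n : R) != 0 by rewrite expf_neq0 // pnatr_eq0 -lt0n.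
have -> : avg_succ F n x - c = (m%:R ^+ n)^-1 * \sum_(t : n.-tuple 'I_m) (F (x ++ t) - c).
  rewrite /avg_succ sumrB sumr_const card_tuple card_ord mulrBr; congr (_ - _).
  by rewrite -[c *+ _]mulr_natr natrX; field.
have HS : `|\sum_(t : n.-tuple 'I_m) (F (x ++ t) - c)| <= m%:R ^+ n * e.
  apply: le_trans; first by apply: ler_norm_sum.
  apply: le_trans (_ : _ <= \sum_(t : n.-tuple 'I_m) e) _; first by apply: ler_sum => t _; apply: H.
  by rewrite sumr_const card_tuple card_ord -[e *+ _]mulr_natr natrX mulrC.
rewrite normrM ger0_norm ?invr_ge0 ?exprn_ge0 ?ler0n //.
apply: le_trans (ler_wpM2l _ HS) _; first by rewrite invr_ge0 exprn_ge0 ?ler0n.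
by rewrite mulrA mulVf // mul1r.
Qed.

Fixpoint aval (R : realType) m (x : node m) : R :=
  if x is i :: x' then ((i : nat)%:R + aval R x') / m%:R else 0.

Lemma aval_cat (R : realType) m (hm : (0 < m)%N) (x t : node m) :
  aval R (x ++ t) = aval R x + aval R t / m%:R ^+ size x.
Proof.
have m0 : (m%:R : R) != 0 by rewrite pnatr_eq0 -lt0n.
elim: x => [|i x IH] /=; first by rewrite expr0 divr1 add0r.
rewrite IH exprS; field.
by rewrite m0 /= expf_neq0.
Qed.

Lemma aval_bnd (R : realType) m (hm : (0 < m)%N) (t : node m) :
  0 <= aval R t /\ aval R t <= 1 - (m%:R ^+ size t)^-1.
Proof.
have m0 : (0 : R) < m%:R by rewrite ltr0n.
elim: t => [|i t [IH1 IH2]] /=; first by rewrite expr0 invr1 subrr lexx.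
split; first by rewrite divr_ge0 ?addr_ge0 ?ler0n // ltW.
have hi : ((i : nat)%:R : R) <= m%:R - 1.
  by rewrite lerBrDr natr1 ler_nat ltn_ord.
have q0 : 0 < (m%:R ^+ size t : R)^-1 by rewrite invr_gt0 exprn_gt0.
apply: (@le_trans _ _ ((m%:R - (m%:R ^+ size t)^-1) / m%:R)).
  rewrite ler_wpM2r ?invr_ge0 ?ler0n //; lra.
rewrite exprS invfM le_eqVlt; apply/orP; left; apply/eqP; field.
by rewrite expf_neq0 ?lt0r_neq0.
Qed.

Definition ps (R : realType) m (z : branch m) (n : nat) : R :=
  \sum_(k < n) ((z k : nat)%:R / m%:R ^+ k.+1).

Lemma ps_aval (R : realType) m (hm : (0 < m)%N) (z : branch m) n :
  ps R z n = aval R (mkseq z n).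
Proof.
have m0 : (m%:R : R) != 0 by rewrite pnatr_eq0 -lt0n.
elim: n => [|n IH]; first by rewrite /ps big_ord0.
rewrite mkseqS -cats1 aval_cat // size_mkseq -IH /ps big_ord_recr /=.
rewrite exprSr; field.
by rewrite m0 expf_neq0.
Qed.

Lemma mkseq_ext m (z : branch m) k n : (k <= n)%N ->
  exists t, mkseq z n = mkseq z k ++ t.
Proof.
elim: n => [|n IH]; first by rewrite leqn0 => /eqP ->; exists [::]; rewrite cats0.
rewrite leq_eqVlt => /orP [/eqP ->|]; first by exists [::]; rewrite cats0.
rewrite ltnS => /IH [t Ht]; exists (rcons t (z n)).
by rewrite mkseqS Ht rcons_cat.
Qed.

Lemma ps_cvg (R : realType) m (hm : (0 < m)%N) (z : branch m) :
  cvgn (ps R z).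
Proof.
apply: nondecreasing_is_cvgn.
  apply/nondecreasing_seqP => n.
  rewrite /ps big_ord_recr /= lerDl divr_ge0 ?ler0n // exprn_ge0 ?ler0n //.
exists 1 => _ [n _ <-]; rewrite ps_aval //.
have [_ H] := aval_bnd R hm (mkseq z n).
apply: le_trans H _; rewrite lerBlDr lerDl invr_ge0 exprn_ge0 // ler0n.
Qed.

Lemma psi_bnd (R : realType) m (hm : (0 < m)%N) (z : branch m) (x : node m) :
  passes z x -> aval R x <= psi R z /\ psi R z <= aval R x + (m%:R ^+ size x)^-1.
Proof.
move=> hx.
have -> : psi R z = lim (ps R z @ \oo) by [].
have key : forall n, (size x <= n)%N ->
    aval R x <= ps R z n /\ ps R z n <= aval R x + (m%:R ^+ size x)^-1.
  move=> n hn; have [t Ht] := mkseq_ext z hn.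
  rewrite ps_aval // Ht -hx aval_cat //.
  have [t1 t2] := aval_bnd R hm t.
  have q0 : (0 : R) < (m%:R ^+ size x)^-1 by rewrite invr_gt0 exprn_gt0 ?ltr0n.
  split; first by rewrite lerDl divr_ge0 // exprn_ge0 // ler0n.
  rewrite lerD2l ler_pdivrMr ?exprn_gt0 ?ltr0n // mulVf ?lt0r_neq0 ?exprn_gt0 ?ltr0n //.
  apply: le_trans t2 _; rewrite lerBlDr lerDl invr_ge0 exprn_ge0 // ler0n.
split.
  apply: limr_ge; first exact: ps_cvg.
  by exists (size x) => // n /= hn; case: (key n hn).
apply: limr_le; first exact: ps_cvg.
by exists (size x) => // n /= hn; case: (key n hn).
Qed.

Lemma psi01 (R : realType) m (hm : (0 < m)%N) (z : branch m) :
  0 <= psi R z <= 1.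
Proof.
have [] := psi_bnd R hm (x := [::]) (z := z) erefl.
by rewrite /= expr0 invr1 add0r => -> ->.
Qed.

Lemma cont_within_eps (R : realType) (f : R -> R) (A : set R) :
  {within A, continuous f} -> forall x, A x -> forall e : R, 0 < e ->
  exists2 d : R, 0 < d & forall s, A s -> `|s - x| < d -> `|f s - f x| < e.
Proof.
move=> /subspace_continuousP cf x Ax e e0.
move: (cf x Ax) => /cvgr_dist_lt /(_ e e0).
move=> /nbhs_ballP [d d0 Hd]; exists d => // s As hs.
have : ball x d s by rewrite /ball /= distrC.
by move=> /Hd /(_ As) /=; rewrite distrC.
Qed.

Lemma unif_cont (R : realType) (f : R -> R) : {within `[0, 1], continuous f} ->
  forall e : R, 0 < e -> exists2 d : R, 0 < d & forall s t : R,
    0 <= s <= 1 -> 0 <= t <= 1 -> `|s - t| < d -> `|f s - f t| < e.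
Proof.
move=> cf e e0.
set K : set R := `[0, 1]%classic.
have cK : compact K by apply: segment_compact.
move/compact_near_coveringP/near_covering_withinP : cK => cov.
have H : \forall d \near (0:R)^'+, K `<=` (fun x => forall s, K s -> `|s - x| < d -> `|f s - f x| < e).
  apply: cov => x Kx.
  have e20 : 0 < e / 2 by rewrite divr_gt0.
  have [eta eta0 Heta] := cont_within_eps cf Kx e20.
  have eta20 : 0 < eta / 2 by rewrite divr_gt0.
  near=> x' d => Kx' s Ks hs; rewrite /= in Kx' hs *.
  have h1 : `|x' - x| < eta / 2.
    near: x'; apply/nbhs_ballP; exists (eta / 2) => // y /=.
    by rewrite /ball /= distrC.
  have h2 : d < eta / 2 by near: d; apply: nbhs_right_lt.
  have hsx : `|s - x| < eta.
    have -> : s - x = (s - x') + (x' - x) by rewrite addrA subrK.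
    apply: le_lt_trans (ler_normD _ _) _; lra.
  have hb' : `|x' - x| < eta by lra.
  have ha := Heta s Ks hsx; have hb := Heta x' Kx' hb'.
  have -> : f s - f x' = (f s - f x) - (f x' - f x) by rewrite opprB addrA subrK.
  apply: le_lt_trans (ler_normB _ _) _; lra.
have [d [d0 Hd]] := filter_ex (filterI (nbhs_right_gt 0) H).
exists d => // s t hs ht hst.
by apply: (Hd t _ s _ hst); rewrite /K /= in_itv /=.
Unshelve. all: by end_near.
Qed.

Lemma geo_small (R : realType) (z : R) : 0 <= z -> z < 1 -> forall d : R, 0 < d ->
  exists N, forall n, (N <= n)%N -> z ^+ n < d.
Proof.
move=> z0 z1 d d0.
have hz : `|z| < 1 by rewrite ger0_norm.
move: (cvg_expr hz) => /cvgr_dist_lt /(_ d d0) [N _ HN].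
exists N => n hn; have := HN n hn; rewrite /= sub0r normrN.
by apply: le_lt_trans; apply: ler_norm.
Qed.

Lemma pow_small (R : realType) m (hm : (1 < m)%N) (d : R) : 0 < d ->
  exists N, forall n, (N <= n)%N -> (m%:R ^+ n : R)^-1 < d.
Proof.
move=> d0.
have m0 : (0 : R) < m%:R by rewrite ltr0n (ltn_trans _ hm).
have z0 : (0 : R) <= m%:R^-1 by rewrite invr_ge0 ltW.
have z1 : (m%:R^-1 : R) < 1 by rewrite invf_lt1 // ltr1n.
have [N HN] := geo_small z0 z1 d0.
by exists N => n hn; rewrite -exprVn; apply: HN.
Qed.

Lemma lim_bound (R : realType) (u : nat -> R) (c e : R) :
  cvgn u -> (forall n, `|u n - c| <= e) -> `|limn u - c| <= e.
Proof.
move=> cu H; rewrite ler_distl; apply/andP; split.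
  by apply: limr_ge => //; exists 0%N => // n _ /=; have := H n; rewrite ler_distl => /andP [].
by apply: limr_le => //; exists 0%N => // n _ /=; have := H n; rewrite ler_distl => /andP [].
Qed.

Lemma av_cvg (R : realType) m (s : node m -> nat -> R) (l : node m -> R) x :
  (forall i, s (rcons x i) n @[n --> \oo] --> l (rcons x i)) ->
  av (fun y => s y n) x @[n --> \oo] --> av l x.
Proof.
move=> H; rewrite /av; apply: cvgMl_tmp.
by apply: cvg_big => //; exact: add_continuous.
Qed.

Lemma avg_sub (R : realType) m (u v : node m -> R) n x :
  avg_succ (fun y => u y - v y) n x = avg_succ u n x - avg_succ v n x.
Proof. by rewrite /avg_succ sumrB mulrBr. Qed.

Definition Ff (R : realType) m (f : R -> R) (y : node m) : R := f (aval R y).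

Definition wf (R : realType) m (f : R -> R) (x : node m) : R :=
  limn (fun n => avg_succ (Ff f) n x).

Definition UC (R : realType) (f : R -> R) (e d : R) := forall s t : R,
    0 <= s <= 1 -> 0 <= t <= 1 -> `|s - t| < d -> `|f s - f t| < e.

Lemma Ff_close (R : realType) m (hm : (0 < m)%N) (f : R -> R) (e d : R) (x t : node m) (s : R) :
  UC f e d -> (m%:R ^+ size x)^-1 < d ->
  aval R x <= s <= aval R x + (m%:R ^+ size x)^-1 -> 0 <= s <= 1 ->
  `|Ff f (x ++ t) - f s| < e.
Proof.
move=> hUC hd hs hs01; rewrite /Ff; apply: hUC => //.
  have [a0 a1] := aval_bnd R hm (x ++ t); rewrite a0 /=.
  apply: le_trans a1 _; rewrite lerBlDr lerDl invr_ge0 exprn_ge0 // ler0n.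
have q0 : (0 : R) < (m%:R ^+ size x)^-1 by rewrite invr_gt0 exprn_gt0 ?ltr0n.
have [t0 t1] := aval_bnd R hm t.
have ht : aval R t / m%:R ^+ size x <= (m%:R ^+ size x)^-1.
  rewrite ler_pdivrMr ?exprn_gt0 ?ltr0n // mulVf ?lt0r_neq0 ?exprn_gt0 ?ltr0n //.
  apply: le_trans t1 _; rewrite lerBlDr lerDl invr_ge0 exprn_ge0 // ler0n.
have ht0 : 0 <= aval R t / m%:R ^+ size x by rewrite divr_ge0 // exprn_ge0 // ler0n.
rewrite aval_cat //; move/andP: hs => [hs1 hs2].
apply: le_lt_trans hd; rewrite ler_distl; apply/andP; split; lra.
Qed.

Lemma avg_Ff_close (R : realType) m (hm : (0 < m)%N) (f : R -> R) (e d : R) (x : node m) (s : R) n :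
  UC f e d -> (m%:R ^+ size x)^-1 < d ->
  aval R x <= s <= aval R x + (m%:R ^+ size x)^-1 -> 0 <= s <= 1 ->
  `|avg_succ (Ff f) n x - f s| <= e.
Proof.
move=> hUC hd hs hs01; apply: avg_bound => // t.
by apply: ltW; apply: Ff_close hUC hd hs hs01.
Qed.

Lemma aval_cell (R : realType) m (hm : (0 < m)%N) (y : node m) :
  aval R y <= aval R y <= aval R y + (m%:R ^+ size y)^-1 /\ 0 <= aval R y <= 1.
Proof.
have [a0 a1] := aval_bnd R hm y.
rewrite lexx lerDl invr_ge0 exprn_ge0 ?ler0n // a0 /=; split => //.
apply: le_trans a1 _; rewrite lerBlDr lerDl invr_ge0 exprn_ge0 // ler0n.
Qed.

Lemma avg_cauchy (R : realType) m (hm : (0 < m)%N) (f : R -> R) (e d : R) (x : node m) n l :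
  UC f e d -> (m%:R ^+ (size x + n))^-1 < d ->
  `|avg_succ (Ff f) (n + l) x - avg_succ (Ff f) n x| <= e.
Proof.
move=> hUC hd.
rewrite -avg_comp -avg_sub -[X in `|X|]subr0.
apply: avg_bound => // t; rewrite subr0 /Ff.
have [hc h01] := aval_cell R hm (x ++ t).
apply: (avg_Ff_close hm _ hUC _ hc h01).
by rewrite size_cat size_tuple.
Qed.

Lemma w_cvg (R : realType) m (hm : (1 < m)%N) (f : R -> R) (x : node m) :
  (forall e : R, 0 < e -> exists2 d : R, 0 < d & UC f e d) ->
  cvgn (fun n => avg_succ (Ff f) n x).
Proof.
move=> hU; have hm0 : (0 < m)%N by apply: ltn_trans hm.
apply: cauchy_cvg; apply: cauchy_exP => e e0.
have e20 : 0 < e / 2 by rewrite divr_gt0.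
have [d d0 hUC] := hU _ e20.
have [N HN] := pow_small hm d0.
exists (avg_succ (Ff f) N x); exists N => // n /= hn.
rewrite /ball /= -(subnKC hn) distrC.
apply: le_lt_trans (avg_cauchy hm0 _ hUC (HN _ _)) _; first by rewrite leq_addl.
by rewrite ltr_pdivrMr // ltr_pMr // ltr1n.
Qed.

Lemma w_close (R : realType) m (hm : (1 < m)%N) (f : R -> R) (e d : R) (x : node m) (s : R) :
  (forall e : R, 0 < e -> exists2 d : R, 0 < d & UC f e d) ->
  UC f e d -> (m%:R ^+ size x)^-1 < d ->
  aval R x <= s <= aval R x + (m%:R ^+ size x)^-1 -> 0 <= s <= 1 ->
  `|wf f x - f s| <= e.
Proof.
move=> hU hUC hd hs hs01; have hm0 : (0 < m)%N by apply: ltn_trans hm.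
apply: lim_bound; first exact: w_cvg.
by move=> n; apply: avg_Ff_close hUC hd hs hs01.
Qed.

Lemma w_bnd (R : realType) m (hm : (1 < m)%N) (f : R -> R) (M : R) (x : node m) :
  (forall e : R, 0 < e -> exists2 d : R, 0 < d & UC f e d) ->
  (forall s, 0 <= s <= 1 -> `|f s| <= M) -> `|wf f x| <= M.
Proof.
move=> hU hM; have hm0 : (0 < m)%N by apply: ltn_trans hm.
rewrite -[wf f x]subr0; apply: lim_bound; first exact: w_cvg.
move=> n; apply: avg_bound => // t; rewrite subr0; apply: hM.
by case: (aval_cell R hm0 (x ++ t)).
Qed.

Lemma w_mart (R : realType) m (hm : (1 < m)%N) (f : R -> R) (x : node m) :
  (forall e : R, 0 < e -> exists2 d : R, 0 < d & UC f e d) ->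
  av (wf f) x = wf f x.
Proof.
move=> hU.
have H : av (fun y => avg_succ (Ff f) n y) x @[n --> \oo] --> av (wf f) x.
  by apply: av_cvg => i; apply: w_cvg.
have H2 : avg_succ (Ff f) n.+1 x @[n --> \oo] --> av (wf f) x.
  by apply: cvg_trans H; apply: near_eq_cvg; near=> n; rewrite avgS.
have H3 : avg_succ (Ff f) n x @[n --> \oo] --> av (wf f) x.
  by rewrite -cvg_shiftS; exact: H2.
by rewrite /wf (cvg_lim _ H3).
Unshelve. all: by end_near.
Qed.

Lemma av_sum (R : realType) m n (G : 'I_n -> node m -> R) x :
  av (fun y => \sum_(i < n) G i y) x = \sum_(i < n) av (G i) x.
Proof.
rewrite /av exchange_big /= mulr_sumr; apply: eq_bigr => i _ //.
Qed.

Lemma av_scale (R : realType) m (a : R) (g : node m -> R) x :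
  av (fun y => a * g y) x = a * av g x.
Proof. by rewrite /av -mulr_sumr; ring. Qed.

Definition cc (R : realType) (beta : R) (k : nat) : R :=
  beta ^+ (k - 1) / (1 - beta) ^+ k.

Lemma S_termE (R : realType) m (beta : R) (h : node m -> R) x i :
  S_term beta h x i = \sum_(j < i) cc beta (i - j) * avg_succ h j x.
Proof. by []. Qed.

Lemma av_S_term (R : realType) m (beta : R) (h : node m -> R) x i :
  av (fun y => S_term beta h y i) x = S_term beta h x i.+1 - cc beta i.+1 * h x.
Proof.
transitivity (\sum_(j < i) cc beta (i - j) * avg_succ h j.+1 x).
  under eq_fun do rewrite S_termE.
  rewrite av_sum; apply: eq_bigr => j _.
  by rewrite av_scale avgS.
rewrite S_termE big_ord_recl /= subn0 avg0 addrAC subrr add0r.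
by apply: eq_bigr => j _; rewrite /bump /= add1n subSS.
Qed.

Definition sig (R : realType) (beta : R) (n : nat) : R := \sum_(i < n) cc beta i.+1.

Lemma S_partialE (R : realType) m (beta : R) (h : node m -> R) x n :
  S_partial beta h x n = \sum_(i < n) S_term beta h x i.+1.
Proof. by rewrite /S_partial big_add1 /= big_mkord. Qed.

Lemma av_S_partial (R : realType) m (beta : R) (h : node m -> R) x n :
  av (fun y => S_partial beta h y n) x = S_partial beta h x n.+1 - h x * sig beta n.+1.
Proof.
under eq_fun do rewrite S_partialE.
rewrite av_sum; under eq_bigr do rewrite av_S_term.
rewrite S_partialE /sig big_ord_recl [X in _ * X]big_ord_recl /=.
have -> : S_term beta h x 1 = cc beta 1 * h x.
  by rewrite S_termE big_ord_recl big_ord0 addr0 /= subn0 avg0.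
rewrite sumrB mulrDr mulr_sumr.
under [X in _ = _ - (_ + X)]eq_bigr do rewrite mulrC.
ring.
Qed.

Lemma sig_cvg (R : realType) (beta : R) : 0 <= beta -> beta < 1 / 2 ->
  sig beta n @[n --> \oo] --> (1 - 2 * beta)^-1.
Proof.
move=> b0 b1.
have b10 : 1 - beta != 0 by apply/eqP => H; lra.
have b20 : 1 - 2 * beta != 0 by apply/eqP => H; lra.
set r := beta / (1 - beta).
have r0 : 0 <= r by rewrite divr_ge0 //; lra.
have r1 : r < 1 by rewrite ltr_pdivrMr; lra.
have hr : `|r| < 1 by rewrite ger0_norm.
have E : sig beta = series (geometric (1 - beta)^-1 r).
  apply/funext => n; rewrite /series /sig /= big_mkord; apply: eq_bigr => i _.
  rewrite /cc subSS subn0 /r exprMn exprVn exprS; field.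
  by rewrite b10 expf_neq0.
rewrite E; have -> : (1 - 2 * beta)^-1 = (1 - beta)^-1 * (1 - r)^-1.
  rewrite /r; field; rewrite b10 /=; apply/eqP => H; lra.
exact: cvg_geometric_series.
Qed.

Lemma S_rel (R : realType) m (hm : (0 < m)%N) (beta : R) (h : node m -> R) :
  0 <= beta -> beta < 1 / 2 -> (forall x, S_conv beta h x) ->
  forall x, av (S_val beta h) x = S_val beta h x - h x * (1 - 2 * beta)^-1.
Proof.
move=> b0 b1 hS x.
have H1 : av (fun y => S_partial beta h y n) x @[n --> \oo] --> av (S_val beta h) x.
  by apply: av_cvg => i; exact: (hS (rcons x i)).
have A : S_partial beta h x n.+1 @[n --> \oo] --> S_val beta h x.
  have A0 : S_partial beta h x n @[n --> \oo] --> S_val beta h x := hS x.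
  by move: A0; rewrite -cvg_shiftS.
have B : sig beta n.+1 @[n --> \oo] --> (1 - 2 * beta)^-1.
  have B0 := sig_cvg b0 b1.
  by move: B0; rewrite -cvg_shiftS.
have H2 : S_partial beta h x n.+1 - h x * sig beta n.+1 @[n --> \oo] -->
    S_val beta h x - h x * (1 - 2 * beta)^-1.
  by apply: cvgB => //; apply: cvgMl_tmp.
have E : (fun n => av (fun y => S_partial beta h y n) x) =
    (fun n => S_partial beta h x n.+1 - h x * sig beta n.+1).
  by apply/funext => n; rewrite av_S_partial.
rewrite E in H1.
exact: (cvg_unique _ H1 H2).
Qed.

Definition PD (R : realType) m (r : R) (D : node m -> R) (x : node m) : R :=
  \sum_(1 <= j < (size x).+1) r ^+ (size x - j) * D (take j x).

Lemma sum_rec (R : realType) (r : R) (g : nat -> R) k :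
  \sum_(1 <= j < k.+2) r ^+ (k.+1 - j) * g j =
  r * \sum_(1 <= j < k.+1) r ^+ (k - j) * g j + g k.+1.
Proof.
rewrite big_nat_recr //= subnn expr0 mul1r; congr (_ + _).
rewrite mulr_sumr; apply: eq_big_nat => j /andP [_ hj].
by rewrite subSn // exprS mulrA.
Qed.

Lemma PD_rcons (R : realType) m (r : R) (D : node m -> R) x i :
  PD r D (rcons x i) = r * PD r D x + D (rcons x i).
Proof.
rewrite /PD size_rcons sum_rec; congr (_ + _); last by rewrite -(size_rcons x i) take_size.
congr (_ * _); apply: eq_big_nat => j /andP [_ hj].
by rewrite -cats1 takel_cat.
Qed.

Lemma PD_nil (R : realType) m (r : R) (D : node m -> R) : PD r D [::] = 0.
Proof. by rewrite /PD big_geq. Qed.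

Lemma PD_lin (R : realType) m (r a b : R) (D E : node m -> R) x :
  PD r (fun y => a * D y + b * E y) x = a * PD r D x + b * PD r E x.
Proof.
rewrite /PD !mulr_sumr -big_split /=; apply: eq_bigr => j _; ring.
Qed.

Lemma geo_sum (R : realType) (r : R) k :
  (1 - r) * \sum_(1 <= j < k.+1) r ^+ (k - j) = 1 - r ^+ k.
Proof.
elim: k => [|k IH]; first by rewrite big_geq // mulr0 expr0 subrr.
have := sum_rec r (fun _ => 1) k; rewrite /=.
under eq_bigr do rewrite mulr1.
under [X in _ = _ * X + _]eq_bigr do rewrite mulr1.
move=> ->; rewrite mulrDr mulr1 mulrCA IH exprS; ring.
Qed.

Lemma pred_rcons m (x : node m) i : pred_node (rcons x i) = x.
Proof. by rewrite /pred_node size_rcons -cats1 /= take_size_cat. Qed.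

Lemma LopS (R : realType) m (beta : R) (u : node m -> R) x i :
  Lop beta u (rcons x i) = u (rcons x i) - beta * u x - (1 - beta) * av u (rcons x i).
Proof.
have H : forall y : node m, y != [::] ->
    Lop beta u y = u y - beta * u (pred_node y) - (1 - beta) * av u y.
  by case=> [|a s] //= _; rewrite avg1.
by rewrite H ?pred_rcons //; case: x.
Qed.

Lemma Lop0 (R : realType) m (beta : R) (u : node m -> R) :
  Lop beta u [::] = u [::] - av u [::].
Proof. by rewrite /Lop avg1. Qed.

Lemma Lop_lin (R : realType) m (beta : R) (u v : node m -> R) (a : R) x :
  Lop beta (fun y => u y + a * v y) x = Lop beta u x + a * Lop beta v x.
Proof.
case/lastP: x => [|x i]; first by rewrite !Lop0 av_lin; ring.
by rewrite !LopS av_lin; ring.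
Qed.

Lemma av_ext (R : realType) m (u v : node m -> R) x :
  (forall i, u (rcons x i) = v (rcons x i)) -> av u x = av v x.
Proof. by move=> H; rewrite /av; congr (_ * _); apply: eq_bigr => i _; apply: H. Qed.

Lemma Lop_PD (R : realType) m (hm : (0 < m)%N) (beta : R) (D e : node m -> R) x i :
  beta != 1 ->
  av D (rcons x i) = D (rcons x i) - e (rcons x i) ->
  Lop beta (PD (beta / (1 - beta)) D) (rcons x i) = (1 - beta) * e (rcons x i).
Proof.
move=> b1 hD; set r := beta / (1 - beta).
have b10 : 1 - beta != 0 by rewrite subr_eq0 eq_sym.
rewrite LopS.
have -> : av (PD r D) (rcons x i) = r * PD r D (rcons x i) + av D (rcons x i).
  rewrite (av_ext (v := fun y => r * PD r D (rcons x i) + 1 * D y)).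
    by rewrite av_lin av_cst // mul1r.
  by move=> j; rewrite PD_rcons mul1r.
rewrite hD !PD_rcons /r; field.
by rewrite b10.
Qed.

Lemma Lop_lev (R : realType) m (hm : (0 < m)%N) (beta : R) x i :
  beta != 1 ->
  Lop beta (fun y : node m => (beta / (1 - beta)) ^+ size y) (rcons x i) = 0.
Proof.
move=> b1; have b10 : 1 - beta != 0 by rewrite subr_eq0 eq_sym.
rewrite LopS.
rewrite (av_ext (v := fun _ => (beta / (1 - beta)) ^+ (size x).+2)); last first.
  by move=> j; rewrite !size_rcons.
rewrite av_cst // size_rcons !exprS; field.
by rewrite b10.
Qed.

Lemma Lop_lev0 (R : realType) m (hm : (0 < m)%N) (beta : R) :
  Lop beta (fun y : node m => (beta / (1 - beta)) ^+ size y) [::] = 1 - beta / (1 - beta).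
Proof.
rewrite Lop0 (av_ext (v := fun _ => (beta / (1 - beta)) ^+ 1)); last first.
  by move=> j; rewrite size_rcons.
by rewrite av_cst // expr1 expr0.
Qed.

Lemma sum_split_bound (R : realType) (r e B : R) k N0 (E : nat -> R) :
  0 <= r -> r <= 1 -> (1 <= N0)%N -> (N0 <= k)%N -> 0 <= e ->
  (forall j, (j <= k)%N -> 0 <= E j <= B) ->
  (forall j, (N0 <= j)%N -> (j <= k)%N -> E j <= e) ->
  \sum_(1 <= j < k.+1) (1 - r) * r ^+ (k - j) * E j <= e + N0%:R * B * r ^+ (k - N0).
Proof.
move=> r0 r1 hN1 hNk e0 hE hEe.
have r1' : 0 <= 1 - r by lra.
apply: (@le_trans _ _ (\sum_(1 <= j < k.+1)
   (e * ((1 - r) * r ^+ (k - j)) + (j < N0)%N%:R * (B * r ^+ (k - N0))))).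
  apply: ler_sum_nat => j /andP [hj1 hjk]; rewrite ltnS in hjk.
  have [hEj0 hEjB] := andP (hE j hjk).
  have w0 : 0 <= (1 - r) * r ^+ (k - j) by rewrite mulr_ge0 // exprn_ge0.
  case: (ltnP j N0) => hjN /=.
    rewrite mul1r -[X in X <= _]add0r; apply: lerD; first exact: mulr_ge0.
    apply: (@le_trans _ _ (1 * r ^+ (k - N0) * B)); last by rewrite mul1r mulrC.
    apply: ler_pM => //.
    apply: ler_pM => //; first by rewrite exprn_ge0.
      by lra.
    by apply: ler_wiXn2l => //; apply: leq_sub2l; apply: ltnW.
  rewrite mul0r addr0 [X in _ <= X]mulrC; apply: ler_wpM2l => //.
  by apply: hEe.
rewrite big_split /= -mulr_sumr -mulr_suml.
apply: lerD.
  rewrite -[X in _ <= X]mulr1; apply: ler_wpM2l => //.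
  rewrite -mulr_sumr geo_sum lerBlDr lerDl exprn_ge0 //.
rewrite mulrA; apply: ler_wpM2r; first by rewrite exprn_ge0.
have hB : 0 <= B by have := hE 0%N (leq0n _); case/andP => H1 H2; apply: le_trans H2.
apply: ler_wpM2r => //.
rewrite (big_cat_nat (n := N0)) //=; last by apply: leq_trans hNk _.
rewrite [X in _ + X]big_nat_cond [X in _ + X]big1; last first.
  by move=> j /andP [/andP [hj _] _]; rewrite ltnNge hj.
rewrite addr0 (eq_big_nat _ _ (F2 := fun _ => 1)); last first.
  by move=> j /andP [_ ->].
by rewrite sumr_const_nat ler_nat leq_subr.
Qed.

Lemma take_mkseq m (z : branch m) j k : (j <= k)%N -> take j (mkseq z k) = mkseq z j.
Proof.
move=> hjk; have [t Ht] := mkseq_ext z hjk.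
by rewrite Ht -{1}(size_mkseq z j) take_size_cat.
Qed.

Lemma passes_take m (z : branch m) x j : passes z x -> (j <= size x)%N -> passes z (take j x).
Proof.
move=> hx hj; rewrite /passes size_take.
have -> : (if (j < size x)%N then j else size x) = j.
  by case: ltnP => // h; apply/eqP; rewrite eqn_leq hj h.
by rewrite {1}hx take_mkseq.
Qed.

Lemma f_bounded (R : realType) (f : R -> R) : {within `[0, 1], continuous f} ->
  exists M : R, forall s, 0 <= s <= 1 -> `|f s| <= M.
Proof.
move=> cf.
have [c1 _ H1] := EVT_max (@ler01 R) cf.
have [c2 _ H2] := EVT_min (@ler01 R) cf.
exists (`|f c1| + `|f c2|) => s hs.
have hs' : s \in `[0, 1]%R by rewrite in_itv /=.
have := H1 s hs'; have := H2 s hs'.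
rewrite ler_norml => a b; apply/andP; split.
  have := lexx `|f c2|; rewrite ler_norml => /andP [h2 _].
  have := normr_ge0 (f c1); lra.
have := ler_norm (f c1); have := normr_ge0 (f c2); lra.
Qed.

Lemma PD_S_sup (R : realType) m (beta : R) (h : node m -> R) (x : node m) :
  `|PD (beta / (1 - beta)) (S_val beta h) x| <= S_sup beta h (size x).
Proof.
rewrite /S_sup.
exact: (le_bigmax 0 (fun t : (size x).-tuple 'I_m => `|\sum_(1 <= j < (size x).+1)
   (beta / (1 - beta)) ^+ (size x - j) * S_val beta h (anc (tval t) j)|) (in_tuple x)).
Qed.

Lemma pos_add1 (R : realType) (c : R) : 0 <= c -> 0 < c + 1.
Proof. move=> *; lra. Qed.

Lemma frac_le (R : realType) (e4 C : R) : 0 <= e4 -> 0 <= C -> e4 / (C + 1) * C <= e4.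
Proof.
move=> e0 C0; have C1 : 0 < C + 1 by lra.
rewrite mulrAC ler_pdivrMr //; nra.
Qed.

Lemma fin_arith (R : realType) (n1 n2 n3 A e e4 K rhoC Y : R) :
  n1 <= A -> A < e4 -> n2 <= e4 + K -> n3 <= Y -> K + Y = rhoC -> rhoC <= e4 ->
  e = 4 * e4 -> 0 < e4 -> n1 + n2 + n3 < e.
Proof. move=> *; lra. Qed.

Lemma av_lin2 (R : realType) m (u v : node m -> R) (a b : R) x :
  av (fun y => a * u y + b * v y) x = a * av u x + b * av v x.
Proof. by rewrite /av big_split /= -!mulr_sumr; ring. Qed.

Lemma size_take_le T (x : seq T) j : (j <= size x)%N -> size (take j x) = j.
Proof.
move=> hj; rewrite size_take.
by case: ltnP => // h; apply/eqP; rewrite eqn_leq hj h.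
Qed.

Lemma dirichlet (R : realType) m (hm : (1 < m)%N) (beta : R) (h : node m -> R) (f : R -> R) :
  {within `[0, 1], continuous f} -> 0 <= beta -> beta < 1 / 2 ->
  (forall x, S_conv beta h x) -> S_sup beta h @ \oo --> (0 : R) ->
  exists U : node m -> R, (forall x, Lop beta U x = h x) /\ boundary_eq U f.
Proof.
move=> cf b0 b1 hS hsup.
have hm0 : (0 < m)%N by apply: ltn_trans hm.
have b10 : 1 - beta != 0 by apply/eqP => H; lra.
have bn1 : beta != 1 by apply/eqP => H; lra.
have b20 : 1 - 2 * beta != 0 by apply/eqP => H; lra.
set r := beta / (1 - beta).
have r0 : 0 <= r by rewrite divr_ge0 //; lra.
have r1 : r < 1 by rewrite ltr_pdivrMr; lra.
have r10 : 1 - r != 0 by apply/eqP => H; lra.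
have r1a : 0 <= 1 - r by lra.
have r1b : 1 - r <= 1 by lra.
have hU : forall e : R, 0 < e -> exists2 d : R, 0 < d & UC f e d.
  by move=> e e0; have [d d0 Hd] := unif_cont cf e0; exists d.
set D := fun y => (1 - r) * S_val beta h y + (1 - r) * wf f y.
set P := PD r D.
set a := (h [::] - Lop beta P [::]) / (1 - r).
exists (fun y => P y + a * r ^+ size y); split.
  case/lastP => [|x i]; rewrite Lop_lin.
    by rewrite Lop_lev0 // -/r /a; field.
  rewrite Lop_lev // mulr0 addr0 /P.
  have hD : av D (rcons x i) = D (rcons x i) -
      (fun y => (1 - r) * (h y * (1 - 2 * beta)^-1)) (rcons x i).
    by rewrite /D av_lin2 (S_rel hm0 b0 b1 hS) (w_mart hm _ hU); ring.
  have := @Lop_PD R m hm0 beta D (fun y => (1 - r) * (h y * (1 - 2 * beta)^-1)) x i bn1 hD.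
  rewrite -/r => ->; rewrite /r; field.
  by rewrite b10 b20.
move=> e e0.
have [M HM] := f_bounded cf.
have M0 : 0 <= M.
  by have := HM 0; rewrite lexx ler01 => /(_ isT); apply: le_trans; rewrite normr_ge0.
set e4 := e / 4.
have e40 : 0 < e4 by rewrite divr_gt0.
have [d d0 hUC] := hU e4 e40.
have [N0' HN0] := pow_small hm d0.
set N0 := N0'.+1.
move: hsup => /cvgr_dist_lt /(_ e4 e40) [K1 _ HK1].
set C := N0%:R * (2 * M) + M + `|a|.
have M2 : 0 <= 2 * M by rewrite mulr_ge0 // ler0n.
have C0 : 0 <= C by rewrite /C !addr_ge0 // mulr_ge0 // ler0n.
have q0 : 0 < e4 / (C + 1) by rewrite divr_gt0 // pos_add1.
have [K2 HK2] := geo_small r0 r1 q0.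
exists (K1 + N0 + K2)%N => x z hx hz.
set k := size x; set t := psi R z.
have ht01 := psi01 R hm0 z.
have hx' : (K1 + N0 + K2 <= k)%N by [].
have hk1 : (K1 <= k)%N by apply: leq_trans hx'; rewrite -addnA leq_addr.
have hkN : (N0 <= k)%N by apply: leq_trans hx'; apply: leq_trans (leq_addl K1 N0) (leq_addr K2 _).
have hk2 : (K2 <= k - N0)%N by rewrite leq_subRL //; apply: leq_trans hx'; rewrite -addnA leq_addl.
have E1 : P x = (1 - r) * PD r (S_val beta h) x + (1 - r) * PD r (wf f) x.
  by rewrite /P /D PD_lin.
have E2 : (1 - r) * PD r (wf f) x - (1 - r ^+ k) * f t =
    \sum_(1 <= j < k.+1) (1 - r) * r ^+ (k - j) * (wf f (take j x) - f t).
  rewrite -geo_sum /PD -/k !mulr_sumr mulr_suml -sumrB; apply: eq_bigr => j _; ring.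
have S1 : `|PD r (S_val beta h) x| < e4.
  apply: le_lt_trans (PD_S_sup beta h x) _.
  have := HK1 k hk1; rewrite /= sub0r normrN; apply: le_lt_trans; exact: ler_norm.
have S2 : `|\sum_(1 <= j < k.+1) (1 - r) * r ^+ (k - j) * (wf f (take j x) - f t)|
    <= e4 + N0%:R * (2 * M) * r ^+ (k - N0).
  apply: le_trans; first by apply: ler_norm_sum.
  have -> : \sum_(1 <= j < k.+1) `|(1 - r) * r ^+ (k - j) * (wf f (take j x) - f t)| =
      \sum_(1 <= j < k.+1) (1 - r) * r ^+ (k - j) * `|wf f (take j x) - f t|.
    apply: eq_bigr => j _; rewrite normrM; congr (_ * _).
    by rewrite ger0_norm // mulr_ge0 ?exprn_ge0.
  apply: sum_split_bound => //; first exact: ltW.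
  - by rewrite ltW.
  - move=> j hj; rewrite normr_ge0 /=.
    apply: le_trans (ler_normB _ _) _.
    have -> : 2 * M = M + M by ring.
    by apply: lerD; [apply: (w_bnd hm (take j x) hU HM) | apply: HM].
  - move=> j hNj hjk.
    have hsz := size_take_le hjk.
    have hp := passes_take hz hjk.
    apply: (w_close hm hU hUC); first by rewrite hsz; apply: HN0; apply: ltnW.
      by have [-> ->] := psi_bnd R hm0 hp.
    exact: ht01.
have S3 : r ^+ k <= r ^+ (k - N0) by apply: ler_wiXn2l => //; [exact: ltW | exact: leq_subr].
have S4 : r ^+ (k - N0) < e4 / (C + 1) by apply: HK2.
set rho := r ^+ (k - N0).
have rho0 : 0 <= rho by rewrite exprn_ge0.
have S5 : rho * C <= e4.
  apply: (@le_trans _ _ (e4 / (C + 1) * C)); first by rewrite ler_wpM2r // ltW.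
  exact: frac_le (ltW e40) C0.
have rk0 : 0 <= r ^+ k by rewrite exprn_ge0.
have T1 : `|(1 - r) * PD r (S_val beta h) x| <= `|PD r (S_val beta h) x|.
  by rewrite normrM ger0_norm // ler_piMl // normr_ge0.
have T3 : `|r ^+ k * (a - f t)| <= rho * (`|a| + M).
  rewrite normrM ger0_norm //; apply: ler_pM => //.
  by apply: le_trans (ler_normB _ _) _; rewrite lerD2l; apply: HM.
have Eq : P x + a * r ^+ size x - f t = (1 - r) * PD r (S_val beta h) x +
   ((1 - r) * PD r (wf f) x - (1 - r ^+ k) * f t) + r ^+ k * (a - f t).
  by rewrite E1 -/k; ring.
rewrite Eq E2.
set X1 := (1 - r) * PD r (S_val beta h) x.
set X2 := \sum_(1 <= j < k.+1) _.
set X3 := r ^+ k * (a - f t).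
have tri : `|X1 + X2 + X3| <= `|X1| + `|X2| + `|X3|.
  by apply: le_trans (ler_normD _ _) _; rewrite lerD2r ler_normD.
have hC : N0%:R * (2 * M) * rho + rho * (`|a| + M) = rho * C by rewrite /C; ring.
have e4e : e = 4 * e4 by rewrite /e4; field.
apply: le_lt_trans tri _.
apply: (fin_arith T1 S1 S2 T3 hC S5 e4e e40).
Qed.

Lemma Lop_sub (R : realType) m (beta : R) (u v : node m -> R) x :
  Lop beta (fun y => u y - v y) x = Lop beta u x - Lop beta v x.
Proof.
have := Lop_lin beta u v (-1) x.
have -> : (fun y => u y + -1 * v y) = (fun y => u y - v y) by apply/funext => y; ring.
by move=> ->; ring.
Qed.

Lemma av_ge0 (R : realType) m (d : node m -> R) x : (forall y, 0 <= d y) -> 0 <= av d x.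
Proof. by move=> H; rewrite /av mulr_ge0 ?invr_ge0 ?ler0n // sumr_ge0. Qed.

Lemma Lop_le_self (R : realType) m (beta : R) (d : node m -> R) x :
  0 <= beta -> beta <= 1 -> (forall y, 0 <= d y) -> Lop beta d x <= d x.
Proof.
move=> b0 b1 H; have := av_ge0 x H.
case/lastP: x => [|x i] hav; first by rewrite Lop0 lerBlDr lerDl.
rewrite LopS; have := H x; have hb : 0 <= 1 - beta by lra.
move=> hx; have h1 := mulr_ge0 b0 hx; have h2 := mulr_ge0 hb hav; lra.
Qed.

Lemma Lop_ge0_max (R : realType) m (hm : (0 < m)%N) (beta : R) (d : node m -> R) x :
  0 <= beta -> beta <= 1 -> (forall y, d y <= d x) -> 0 <= Lop beta d x.
Proof.
move=> b0 b1 H.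
have hav : av d x <= d x.
  by rewrite -[X in _ <= X](av_cst hm (d x) x); apply: av_le.
case/lastP: x H hav => [|x i] H hav; first by rewrite Lop0 subr_ge0.
rewrite LopS; have hb : 0 <= 1 - beta by lra.
have h1 : beta * d x <= beta * d (rcons x i) by rewrite ler_wpM2l.
have h2 : (1 - beta) * av d (rcons x i) <= (1 - beta) * d (rcons x i) by rewrite ler_wpM2l.
have -> : d (rcons x i) = beta * d (rcons x i) + (1 - beta) * d (rcons x i) by ring.
lra.
Qed.

Definition ext (R : realType) m (N : nat) (V : node m -> R) (r : R) (w : node m -> R)
  (x : node m) : R :=
  if (size x <= N)%N then w x else V x + (w (take N x) - V (take N x)) * r ^+ (size x - N).

Lemma ext_in (R : realType) m N (V : node m -> R) (r : R) w x :
  (size x <= N)%N -> ext N V r w x = w x.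
Proof. by rewrite /ext => ->. Qed.

Lemma ext_out (R : realType) m N (V : node m -> R) (r : R) w x :
  (N <= size x)%N -> ext N V r w x = V x + (w (take N x) - V (take N x)) * r ^+ (size x - N).
Proof.
move=> h2; rewrite /ext; case: (leqP (size x) N) => h1 //.
have e : size x = N by apply/eqP; rewrite eqn_leq h1 h2.
have -> : take N x = x by rewrite -e take_size.
by rewrite e subnn expr0 mulr1; ring.
Qed.

Lemma ext_mono (R : realType) m N (V : node m -> R) (r : R) w w' :
  0 <= r -> (forall y, (size y <= N)%N -> w y <= w' y) ->
  forall x, ext N V r w x <= ext N V r w' x.
Proof.
move=> r0 H x; rewrite /ext; case: leqP => h; first exact: H.
rewrite lerD2l ler_wpM2r ?exprn_ge0 // lerD2r; apply: H.
by rewrite size_take h.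
Qed.

Lemma ext_le_V (R : realType) m N (V : node m -> R) (r : R) w :
  0 <= r -> (forall y, (size y <= N)%N -> w y <= V y) ->
  forall x, ext N V r w x <= V x.
Proof.
move=> r0 H x; rewrite /ext; case: leqP => h; first exact: H.
rewrite gerDl mulr_le0_ge0 ?exprn_ge0 // subr_le0; apply: H.
by rewrite size_take h.
Qed.

Lemma Lop_ext_out (R : realType) m (hm : (0 < m)%N) (beta : R) N (V w : node m -> R) x :
  beta != 1 -> (N < size x)%N ->
  Lop beta (ext N V (beta / (1 - beta)) w) x = Lop beta V x.
Proof.
move=> bn1 hN; have b10 : 1 - beta != 0 by rewrite subr_eq0 eq_sym.
set r := beta / (1 - beta).
case/lastP: x hN => [|p i] //; rewrite size_rcons ltnS => hN.
set c := w (take N p) - V (take N p).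
have tk : forall s : node m, take N (p ++ s) = take N p.
  by move=> s; rewrite takel_cat.
rewrite !LopS.
have e1 : ext N V r w (rcons p i) = V (rcons p i) + c * r ^+ (size p - N).+1.
  rewrite ext_out; last by rewrite size_rcons leqW.
  by rewrite -cats1 tk size_cat /= addn1 subSn.
have e2 : ext N V r w p = V p + c * r ^+ (size p - N) by rewrite ext_out.
rewrite e1 e2.
rewrite (av_ext (v := fun y => V y + (c * r ^+ (size p - N).+2) * 1)); last first.
  move=> j; rewrite ext_out; last by rewrite !size_rcons leqW // leqW.
  have tk2 : take N (rcons (rcons p i) j) = take N p by rewrite -!cats1 -catA tk.
  rewrite tk2 !size_rcons /c mulr1 subSn ?subSn //; exact: leqW.
rewrite av_lin av_cst // !exprS /r; field.
by rewrite b10.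
Qed.

Lemma le_sum_term (R : realType) (I : finType) (F : I -> R) i :
  (forall j, 0 <= F j) -> F i <= \sum_j F j.
Proof. by move=> H; rewrite (bigD1 i) //= lerDl sumr_ge0. Qed.

Lemma uv_arith (R : realType) (a b c e d : R) :
  `|a - b| < d / 2 -> `|c - e| < d / 2 -> d <= b - e -> c < a.
Proof.
rewrite !ltr_norml => /andP [h1 h2] /andP [h3 h4] h5; lra.
Qed.

Lemma nodes_finite m N : finite_set [set x : node m | (size x <= N)%N].
Proof.
apply: (@sub_finite_set _ _ (\bigcup_(k in `I_N.+1) range (fun t : k.-tuple 'I_m => tval t))).
  move=> x /= hx; exists (size x) => //=.
  by exists (in_tuple x).
apply: bigcup_finite; first exact: finite_II.
by move=> k _; apply: finite_image; apply: finite_finset.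
Qed.


Lemma eps_le (R : realType) (a b : R) : (forall eta : R, 0 < eta -> a <= b + eta) -> a <= b.
Proof.
move=> H; case: (lerP a b) => // hab.
have := H ((a - b) / 2); rewrite divr_gt0 ?subr_gt0 // => /(_ isT); lra.
Qed.

Lemma bnd_arith (R : realType) (A c C rho e : R) :
  `|A| < e / 2 -> - C <= c -> c <= 0 -> 0 <= rho -> rho * C <= e / 2 ->
  `|A + c * rho| < e.
Proof.
move=> h1 h2 h3 h4 h5.
have h6 : `|c * rho| <= rho * C.
  rewrite normrM (ger0_norm h4) mulrC ler_wpM2l // ler0_norm //; lra.
apply: le_lt_trans (ler_normD _ _) _; lra.
Qed.

Lemma pos_min3 (R : realType) (a b c : R) : 0 < a -> 0 < b -> 0 < c ->
  exists2 e : R, 0 < e & [/\ e <= a, e <= b & e <= c].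
Proof.
move=> ha hb hc; exists (Num.min a (Num.min b c)).
  by rewrite !lt_min ha hb hc.
by rewrite !ge_min !lexx !orbT /= ?orbT.
Qed.

Unset Implicit Arguments.

Theorem theorem1p1 (R : realType) (m : nat) (hm : (2 <= m)%N)
  (beta1 beta2 : R) (h1 h2 : node m -> R) (f g : R -> R) :
  {within `[0, 1], continuous f} ->
  {within `[0, 1], continuous g} ->
  (forall s : R, 0 <= s <= 1 -> g s < f s) ->
  0 <= beta1 -> beta1 < 1 / 2 ->
  0 <= beta2 -> beta2 < 1 / 2 ->
  (forall x : node m, S_conv beta1 h1 x) ->
  (forall x : node m, S_conv beta2 h2 x) ->
  S_sup beta1 h1 @ \oo --> (0 : R) ->
  S_sup beta2 h2 @ \oo --> (0 : R) ->
  exists u v : node m -> R,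
    (forall x : node m,
        Num.max (- Lop beta1 u x + h1 x) (v x - u x) = 0 /\
        Num.min (- Lop beta2 v x + h2 x) (u x - v x) = 0) /\
    boundary_eq u f /\ boundary_eq v g /\
    finite_set [set x : node m | u x = v x].
Proof.
move=> cf cg hfg b10 b11 b20 b21 hS1 hS2 hs1 hs2.
have hm1 : (1 < m)%N by [].
have hm0 : (0 < m)%N by apply: ltn_trans hm1.
have [U [LU bU]] := dirichlet hm1 cf b10 b11 hS1 hs1.
have [V [LV bV]] := dirichlet hm1 cg b20 b21 hS2 hs2.
have b2a : beta2 <= 1 by lra.
have bn1 : beta2 != 1 by apply/eqP => H; lra.
have b2p : 0 < 1 - beta2 by lra.
have b2c : 1 - beta2 != 0 by rewrite subr_eq0 eq_sym.
set r := beta2 / (1 - beta2).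
have r0 : 0 <= r by rewrite divr_ge0 // subr_ge0.
have r1 : r < 1 by rewrite ltr_pdivrMr //; lra.
have cfg := within_continuousB cf cg.
have [c0 c0in Hc0] := EVT_min (@ler01 R) cfg.
set delta := f c0 - g c0.
have delta0 : 0 < delta by rewrite subr_gt0; apply: hfg; move: c0in; rewrite in_itv.
have d20 : 0 < delta / 2 by rewrite divr_gt0.
have [K1 HK1] := bU _ d20.
have [K2 HK2] := bV _ d20.
set N := (K1 + K2).+1.
have hUV : forall x : node m, (N <= size x)%N -> V x < U x.
  move=> x hx.
  pose i0 : 'I_m := Ordinal hm0.
  pose z : branch m := fun k => nth i0 x k.
  have hz : passes z x by rewrite /passes /z mkseq_nth.
  have ht := psi01 R hm0 z.
  have hK1 : (K1 <= size x)%N by apply: leq_trans hx; rewrite ltnW // ltnS leq_addr.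
  have hK2 : (K2 <= size x)%N by apply: leq_trans hx; rewrite ltnW // ltnS leq_addl.
  apply: (uv_arith (HK1 x z hK1 hz) (HK2 x z hK2 hz)).
  by have := Hc0 (psi R z); rewrite in_itv /= ht => /(_ isT).
set C := \sum_(k < N.+1) \sum_(t : k.-tuple 'I_m) `|V t - U t|.
have C0 : 0 <= C by rewrite sumr_ge0 // => k _; rewrite sumr_ge0.
have hC : forall x : node m, (size x <= N)%N -> V x - U x <= C.
  move=> x hx; apply: le_trans (ler_norm _) _.
  have hx' : (size x < N.+1)%N by [].
  apply: le_trans (le_sum_term (F := fun k : 'I_N.+1 => \sum_(t : k.-tuple 'I_m) `|V t - U t|)
           (Ordinal hx') _); last by move=> k; rewrite sumr_ge0.
  exact: (le_sum_term (F := fun t : (size x).-tuple 'I_m => `|V t - U t|) (in_tuple x)).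
(* Perron class *)
pose S := fun w : node m -> R => forall x : node m, (size x <= N)%N ->
  [/\ w x <= U x, w x <= V x & Lop beta2 (ext N V r w) x <= h2 x].
pose w0 := fun y : node m => V y - C.
have Sw0 : S w0.
  move=> x hx; split.
  - by rewrite /w0 lerBlDr -lerBlDl; apply: hC.
  - by rewrite /w0 lerBlDr lerDl.
  have := @Lop_ge0_max R m hm0 beta2 (fun y => V y - ext N V r w0 y) x b20 b2a.
  rewrite Lop_sub LV subr_ge0; apply => y.
  have -> : V x - ext N V r w0 x = C by rewrite ext_in // /w0; ring.
  rewrite /ext; case: leqP => hy; first by rewrite /w0 opprB addrC subrK.
  have -> : V y - (V y + (w0 (take N y) - V (take N y)) * r ^+ (size y - N)) =
    C * r ^+ (size y - N) by rewrite /w0; ring.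
  by rewrite ler_piMr // exprn_ile1 // ltW.
pose E := fun x : node m => [set y : R | exists2 w, S w & y = w x].
pose vs := fun x : node m => sup (E x).
have hsup : forall x : node m, (size x <= N)%N -> has_sup (E x).
  move=> x hx; split; first by exists (w0 x); exists w0.
  by exists (U x) => y [w Sw ->]; case: (Sw x hx).
have vs_ub : forall w, S w -> forall x : node m, (size x <= N)%N -> w x <= vs x.
  by move=> w Sw x hx; apply: sup_upper_bound (hsup x hx) _ _; exists w.
have vs_U : forall x : node m, (size x <= N)%N -> vs x <= U x.
  move=> x hx; apply: ge_sup; first by exists (w0 x); exists w0.
  by move=> y [w Sw ->]; case: (Sw x hx).
have vs_V : forall x : node m, (size x <= N)%N -> vs x <= V x.
  move=> x hx; apply: ge_sup; first by exists (w0 x); exists w0.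
  by move=> y [w Sw ->]; case: (Sw x hx).
have mono_eq : forall (w w' : node m -> R) x, (size x <= N)%N ->
    (forall y, (size y <= N)%N -> w y <= w' y) -> w x = w' x ->
    Lop beta2 (ext N V r w') x <= Lop beta2 (ext N V r w) x.
  move=> w w' x hx hww' hx'.
  have := @Lop_le_self R m beta2 (fun y => ext N V r w' y - ext N V r w y) x b20 b2a.
  rewrite Lop_sub !ext_in // hx' subrr subr_le0; apply => y.
  by rewrite subr_ge0; apply: ext_mono.
have mono_slope : forall (w w' : node m -> R) x, (size x <= N)%N ->
    (forall y, (size y <= N)%N -> w y <= w' y) ->
    Lop beta2 (ext N V r w') x <= Lop beta2 (ext N V r w) x + (w' x - w x).
  move=> w w' x hx hww'.
  have := @Lop_le_self R m beta2 (fun y => ext N V r w' y - ext N V r w y) x b20 b2a.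
  rewrite Lop_sub !ext_in // lerBlDl addrC; apply => y.
  by rewrite subr_ge0; apply: ext_mono.
have Svs : S vs.
  move=> x hx; split; [exact: vs_U | exact: vs_V |].
  apply: eps_le => eta eta0.
  have [_ [w Sw ->] hw] := sup_adherent eta0 (hsup x hx).
  pose w'' := fun y => if y == x then w x else vs y.
  have h_a : Lop beta2 (ext N V r w'') x <= Lop beta2 (ext N V r w) x.
    apply: mono_eq => //; last by rewrite /w'' eqxx.
    move=> y hy; rewrite /w''; case: eqP => [->|_] //; exact: vs_ub.
  have h_b : Lop beta2 (ext N V r vs) x <= Lop beta2 (ext N V r w'') x + (vs x - w'' x).
    apply: mono_slope => // y hy; rewrite /w''; case: eqP => [->|_] //; exact: vs_ub.
  have h_c := (let: And3 _ _ h := Sw x hx in h).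
  move: h_b; rewrite /w'' eqxx => h_b.
  apply: le_trans h_b _; apply: lerD; first exact: le_trans h_a h_c.
  by rewrite lerBlDr addrC -lerBlDr ltW.
have hcomp : forall x : node m, (size x <= N)%N -> vs x < U x ->
    Lop beta2 (ext N V r vs) x = h2 x.
  move=> x hx hxU.
  have [_ _ hL] := Svs x hx.
  have := vs_V x hx; rewrite le_eqVlt => /orP [/eqP hxV | hxV].
    apply/eqP; rewrite eq_le hL /=.
    have := @Lop_le_self R m beta2 (fun y => V y - ext N V r vs y) x b20 b2a.
    rewrite Lop_sub LV ext_in // hxV subrr subr_le0; apply => y.
    by rewrite subr_ge0; apply: ext_le_V => // ? ?; apply: vs_V.
  apply/eqP; rewrite eq_le hL /=; rewrite leNgt; apply/negP => hlt.
  have g1 : 0 < U x - vs x by rewrite subr_gt0.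
  have g2 : 0 < V x - vs x by rewrite subr_gt0.
  have g3 : 0 < h2 x - Lop beta2 (ext N V r vs) x by rewrite subr_gt0.
  have [eps eps0 [e1 e2 e3]] := pos_min3 g1 g2 g3.
  pose w' := fun y => if y == x then vs x + eps else vs y.
  have hge : forall y, (size y <= N)%N -> vs y <= w' y.
    by move=> y hy; rewrite /w'; case: eqP => [->|_] //; rewrite lerDl ltW.
  have Sw' : S w'.
    move=> y hy; case: (eqVneq y x) => [->|hyx].
      have hwx : w' x = vs x + eps by rewrite /w' eqxx.
      split; rewrite ?hwx.
      - by rewrite -lerBrDl.
      - by rewrite -lerBrDl.
      apply: le_trans (mono_slope vs w' x hx hge) _.
      by rewrite hwx addrAC subrr add0r -lerBrDl.
    have hwy : w' y = vs y by rewrite /w' (negbTE hyx).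
    split; rewrite ?hwy; [exact: vs_U | exact: vs_V |].
    apply: le_trans (mono_eq vs w' y hy hge (esym hwy)) _.
    by case: (Svs y hy).
  have := vs_ub w' Sw' x hx; rewrite /w' eqxx gerDl leNgt eps0.
  by [].
pose v := ext N V r vs.
have vU : forall x, v x <= U x.
  move=> x; case: (leqP (size x) N) => hx; first by rewrite /v ext_in //; apply: vs_U.
  apply: le_trans (ltW (hUV x (ltnW hx))).
  by apply: ext_le_V => // ? ?; apply: vs_V.
have vlt : forall x : node m, (N < size x)%N -> v x < U x.
  move=> x hx; apply: le_lt_trans (hUV x (ltnW hx)).
  by apply: ext_le_V => // ? ?; apply: vs_V.
exists U, v; split; [|split; [exact: bU|split]].
- move=> x; split.
    by rewrite LU addrC subrr max_l // subr_le0.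
  case: (leqP (size x) N) => hx.
    have [_ _ hL] := Svs x hx.
    have hL' : 0 <= - Lop beta2 v x + h2 x by rewrite addrC subr_ge0.
    have := vU x; rewrite le_eqVlt => /orP [/eqP ->|hlt].
      by rewrite subrr min_r.
    have hvs : vs x < U x by move: hlt; rewrite /v ext_in.
    by rewrite /v hcomp // addrC subrr min_l // subr_ge0 ltW.
  by rewrite /v Lop_ext_out // LV addrC subrr min_l // subr_ge0 ltW // vlt.
- move=> e e0.
  have e20 : 0 < e / 2 by rewrite divr_gt0.
  have [K HK] := bV _ e20.
  have q0 : 0 < e / 2 / (C + 1) by rewrite divr_gt0 // pos_add1.
  have [K' HK'] := geo_small r0 r1 q0.
  exists (N + K + K')%N => x z hx hz.
  have hN : (N <= size x)%N by apply: leq_trans hx; rewrite -addnA leq_addr.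
  have hK : (K <= size x)%N by apply: leq_trans hx; apply: leq_trans (leq_addl N K) (leq_addr K' _).
  have hK' : (K' <= size x - N)%N by rewrite leq_subRL //; apply: leq_trans hx; rewrite -addnA leq_add2l leq_addl.
  have hT : (size (take N x) <= N)%N by rewrite size_take_le.
  rewrite /v ext_out //.
  have -> : V x + (vs (take N x) - V (take N x)) * r ^+ (size x - N) - g (psi R z) =
      (V x - g (psi R z)) + (vs (take N x) - V (take N x)) * r ^+ (size x - N) by ring.
  apply: (bnd_arith (C := C) (HK x z hK hz)).
  + have := vs_ub w0 Sw0 _ hT; rewrite /w0 => H.
    by rewrite lerBrDr addrC.
  + by rewrite subr_le0; apply: vs_V.
  + by rewrite exprn_ge0.
  + apply: le_trans (frac_le (ltW e20) C0).
    by rewrite ler_wpM2r // ltW // HK'.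
- apply: (sub_finite_set (B := [set x : node m | (size x <= N)%N])); last exact: nodes_finite.
  move=> x /= hx; case: leqP => // hlt.
  by move: (vlt x hlt); rewrite hx ltxx.
Qed.
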